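(* $\mathrm{SL}(2,\mathbb{R})$ and $\mathrm{GL}(2,\mathbb{R})$ have the topological $R_\infty$-property.
   Context: For an automorphism $\varphi$ of a group $G$, the $\varphi$-twisted conjugacy classes are the equivalence classes of the relation $x\sim_\varphi y$ iff $y=gx\varphi(g)^{-1}$ for some $g\in G$; $R(\varphi)\in\mathbb{N}\cup\{\infty\}$ is their number. A topological group $G$ has the topological $R_\infty$-property if $R(\varphi)=\infty$ for every automorphism $\varphi$ of $G$ that is a homeomorphism (for a Lie group: every continuous automorphism). *)

(* Defs.v *)
From HB Require Import structures.
From mathcomp Require Import all_boot all_order all_algebra.
From mathcomp Require Import all_classical all_reals all_analysis.
Set Implicit Arguments. Unset Strict Implicit. Unset Printing Implicit Defensive.
Import Order.TTheory GRing.Theory Num.Theory.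
Local Open Scope classical_set_scope.
Local Open Scope ring_scope.

Definition SL2 (R : realType) : set 'M[R^o]_2 := [set A | \det A = 1].
Definition GL2 (R : realType) : set 'M[R^o]_2 := [set A | A \in unitmx].

Definition top_aut (R : realType) (G : set 'M[R^o]_2) (phi : 'M[R^o]_2 -> 'M[R^o]_2) :=
  [/\ (forall A, G A -> G (phi A)),
      (forall A B, G A -> G B -> phi (A *m B) = phi A *m phi B),
      {within G, continuous phi} &
      exists psi : 'M[R^o]_2 -> 'M[R^o]_2,
        [/\ (forall A, G A -> G (psi A)),
            (forall A, G A -> psi (phi A) = A),
            (forall A, G A -> phi (psi A) = A) &
            {within G, continuous psi}]].

Definition twisted_class (R : realType) (G : set 'M[R^o]_2)
    (phi : 'M[R^o]_2 -> 'M[R^o]_2) (x : 'M[R^o]_2) : set 'M[R^o]_2 :=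
  [set y | exists2 g, G g & y = g *m x *m invmx (phi g)].

Definition Reidemeister_infinite (R : realType) (G : set 'M[R^o]_2)
    (phi : 'M[R^o]_2 -> 'M[R^o]_2) : Prop :=
  infinite_set (twisted_class G phi @` G).

Definition top_Rinf (R : realType) (G : set 'M[R^o]_2) : Prop :=
  forall phi, top_aut G phi -> Reidemeister_infinite G phi.

(* Main.v *)
Require Import Defs.
From HB Require Import structures.
From mathcomp Require Import all_boot all_order all_algebra.
From mathcomp Require Import all_classical all_reals all_analysis.
From mathcomp Require Import ring lra.
Set Implicit Arguments. Unset Strict Implicit. Unset Printing Implicit Defensive.
Import Order.TTheory GRing.Theory Num.Theory.
Local Open Scope ring_scope.

Section Mat.
Variable R : realType.
Local Notation M := 'M[R^o]_2.

Definition mk (a b c d : R) : M :=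
  \matrix_(i < 2, j < 2)
    (if (i : nat) == 0%N then (if (j : nat) == 0%N then a else b)
     else (if (j : nat) == 0%N then c else d)).

Lemma mk_eta (A : M) : A = mk (A 0 0) (A 0 1) (A 1 0) (A 1 1).
Proof.
apply/matrixP => i j; rewrite mxE.
case: i => [[|[|i]] Hi] //; case: j => [[|[|j]] Hj] //=;
  congr (A _ _); exact: val_inj.
Qed.

Lemma mk_inj a b c d a' b' c' d' :
  mk a b c d = mk a' b' c' d' -> [/\ a = a', b = b', c = c' & d = d'].
Proof.
move=> E.
have e := fun i j => congr1 (fun A : M => A i j) E.
move: (e 0 0) (e 0 1) (e 1 0) (e 1 1); rewrite !mxE /=. by [].
Qed.

Lemma mk_mul a b c d e f g h :
  mk a b c d *m mk e f g h = mk (a*e+b*g) (a*f+b*h) (c*e+d*g) (c*f+d*h).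
Proof.
apply/matrixP => i j; rewrite !mxE !big_ord_recl big_ord0 !mxE /=.
case: i => [[|[|i]] Hi] //; case: j => [[|[|j]] Hj] //=; rewrite addr0 //.
Qed.

Lemma mk_det a b c d : \det (mk a b c d) = a * d - b * c.
Proof.
rewrite (expand_det_row _ 0) !big_ord_recl big_ord0 /cofactor !mxE /=.
rewrite !det_mx11 !mxE /= expr0 expr1; ring.
Qed.

Lemma mk_tr a b c d : \tr (mk a b c d) = a + d.
Proof. by rewrite /mxtrace !big_ord_recl big_ord0 !mxE /= addr0. Qed.

Lemma mk1 : (1%:M : M) = mk 1 0 0 1.
Proof.
apply/matrixP => i j; rewrite !mxE.
case: i => [[|[|i]] Hi] //; case: j => [[|[|j]] Hj] //=.
Qed.

Lemma mkZ k a b c d : k *: mk a b c d = mk (k*a) (k*b) (k*c) (k*d).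
Proof.
apply/matrixP => i j; rewrite !mxE.
case: i => [[|[|i]] Hi] //; case: j => [[|[|j]] Hj] //=.
Qed.

Lemma mkN a b c d : - mk a b c d = mk (-a) (-b) (-c) (-d).
Proof.
apply/matrixP => i j; rewrite !mxE.
case: i => [[|[|i]] Hi] //; case: j => [[|[|j]] Hj] //=.
Qed.

Lemma mk00 a b c d : mk a b c d 0 0 = a. Proof. by rewrite mxE. Qed.
Lemma mk01 a b c d : mk a b c d 0 1 = b. Proof. by rewrite mxE. Qed.
Lemma mk10 a b c d : mk a b c d 1 0 = c. Proof. by rewrite mxE. Qed.
Lemma mk11 a b c d : mk a b c d 1 1 = d. Proof. by rewrite mxE. Qed.
Definition mkE := (mk00, mk01, mk10, mk11).

End Mat.
Section Grp.
Variable R : realType.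
Local Notation M := 'M[R^o]_2.
Local Notation mk := (@mk R).

Definition u (t : R) : M := mk 1 t 0 1.
Definition v (t : R) : M := mk 1 0 t 1.
Definition sl (A : M) : Prop := \det A = 1.
Definition hom (phi : M -> M) : Prop :=
  [/\ forall X, sl X -> sl (phi X),
      forall X Y, sl X -> sl Y -> phi (X *m Y) = phi X *m phi Y &
      forall X Y, sl X -> sl Y -> phi X = phi Y -> X = Y].

Lemma sl_mul X Y : sl X -> sl Y -> sl (X *m Y).
Proof. by rewrite /sl det_mulmx => -> ->; rewrite mulr1. Qed.

Lemma sl_unit X : sl X -> X \in unitmx.
Proof. by rewrite /sl unitmxE => ->; rewrite unitr1. Qed.

Lemma sl1 : sl 1%:M.
Proof. by rewrite /sl det1. Qed.

Lemma sl_mk a b c d : a * d - b * c = 1 -> sl (mk a b c d).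
Proof. by rewrite /sl mk_det. Qed.

Lemma hom1 phi : hom phi -> phi 1%:M = 1%:M.
Proof.
case=> H1 H2 H3.
have e : phi 1%:M = phi 1%:M *m phi 1%:M by rewrite -H2 ?mulmx1 //; exact: sl1.
have U := sl_unit (H1 _ sl1).
have := congr1 (mulmx (invmx (phi 1%:M))) e.
by rewrite (mulVmx U) mulmxA (mulVmx U) mul1mx.
Qed.

Lemma cube_mk a b c d : a + d = -1 -> a * d - b * c = 1 ->
  mk a b c d *m mk a b c d *m mk a b c d = 1%:M.
Proof.
move=> Ht Hd; have Ed : d = -1 - a by lra. subst d.
have H : b * c = - a - a * a - 1 by lra.
rewrite !mk_mul mk1.
have Ha := congr1 (fun z => z * a) H; have Hb := congr1 (fun z => z * b) H.
have Hc := congr1 (fun z => z * c) H; simpl in Ha, Hb, Hc.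
by congr (mk _ _ _ _); lra.
Qed.


Lemma unip phi X g : hom phi -> sl X -> sl g -> X <> 1%:M ->
  X *m X *m X <> 1%:M -> g *m X = X *m X *m g ->
  [/\ sl (phi X), phi X <> 1%:M & (phi X) 0 0 + (phi X) 1 1 = 2].
Proof.
move=> H sX sg XnI X3nI E.
have h1 := hom1 H.
case: H => H1 H2 H3.
have hP := H1 _ sX; have hG := H1 _ sg.
have sXX := sl_mul sX sX.
have e : phi g *m phi X = phi X *m phi X *m phi g.
  have : phi (g *m X) = phi (X *m X *m g) by rewrite E.
  by rewrite H2 // H2 // H2.
have PnI : phi X <> 1%:M.
  by move=> e1; apply: XnI; apply: H3 => //; [exact: sl1 | rewrite h1].
have P3 : phi X *m phi X *m phi X <> 1%:M.
  move=> e1; apply: X3nI; apply: H3; [exact: sl_mul sXX sX|exact: sl1|].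
  by rewrite h1 -e1 H2 // H2.
have e2 : phi X *m phi X = phi g *m phi X *m invmx (phi g).
  by rewrite e mulmxK // sl_unit.
have tr : \tr (phi X *m phi X) = \tr (phi X).
  by rewrite e2 -mulmxA mxtrace_mulC mulmxKV // sl_unit.
split => //.
move: tr hP P3; rewrite [phi X]mk_eta.
set a := phi X 0 0; set b := phi X 0 1; set c := phi X 1 0; set d := phi X 1 1.
rewrite /sl mk_det !mkE => tr hP P3.
rewrite mk_mul !mk_tr in tr.
have : (a + d - 2) * (a + d + 1) = 0 by lra.
move/eqP; rewrite mulf_eq0 => /orP [] /eqP F; first lra.
by exfalso; apply: P3; apply: cube_mk => //; lra.
Qed.

Lemma sqrt2 : exists s : R, s * s = 2.
Proof.
exists (Num.sqrt 2); rewrite -expr2 sqr_sqrtr //; lra.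
Qed.

Lemma unip_u phi t : hom phi -> t != 0 ->
  [/\ sl (phi (u t)), phi (u t) <> 1%:M & (phi (u t)) 0 0 + (phi (u t)) 1 1 = 2].
Proof.
move=> H t0; have [s s2] := sqrt2.
apply: (@unip _ _ (mk s 0 0 (s/2)) H).
- by apply: sl_mk; lra.
- by apply: sl_mk; lra.
- rewrite mk1 => /mk_inj [_ e _ _]; move/eqP: t0; rewrite e; lra.
- rewrite /u !mk_mul mk1 => /mk_inj [_ e _ _]; move/eqP: t0; lra.
- by rewrite /u !mk_mul; congr (mk _ _ _ _); lra.
Qed.

Lemma unip_v phi t : hom phi -> t != 0 ->
  [/\ sl (phi (v t)), phi (v t) <> 1%:M & (phi (v t)) 0 0 + (phi (v t)) 1 1 = 2].
Proof.
move=> H t0; have [s s2] := sqrt2.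
apply: (@unip _ _ (mk (s/2) 0 0 s) H).
- by apply: sl_mk; lra.
- by apply: sl_mk; lra.
- rewrite mk1 => /mk_inj [_ _ e _]; move/eqP: t0; rewrite e; lra.
- rewrite /v !mk_mul mk1 => /mk_inj [_ _ e _]; move/eqP: t0; lra.
- by rewrite /v !mk_mul; congr (mk _ _ _ _); lra.
Qed.

Lemma mN1 : - 1%:M = mk (-1) 0 0 (-1) :> M.
Proof. by rewrite mk1 mkN oppr0. Qed.

Lemma slN1 : sl (- 1%:M).
Proof. rewrite mN1; apply: sl_mk; lra. Qed.

Lemma homN1 phi : hom phi -> phi (- 1%:M) = - 1%:M.
Proof.
move=> H; have h1 := hom1 H; case: H => H1 H2 H3.
have sN := slN1; have s1 := sl1.
have sZ := H1 _ slN1.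
have ZZ : phi (- 1%:M) *m phi (- 1%:M) = 1%:M.
  by rewrite -H2 // mulmxN mulNmx opprK mulmx1.
have Zn : phi (- 1%:M) <> 1%:M.
  move=> e; have : - 1%:M = 1%:M :> M.
    by apply: H3; rewrite // h1.
  by rewrite mN1 mk1 => /mk_inj [e1 _ _ _]; clear -e1; lra.
move: sZ ZZ Zn; rewrite [phi _]mk_eta.
set a := phi _ 0 0; set b := phi _ 0 1; set c := phi _ 1 0; set d := phi _ 1 1.
rewrite /sl mk_det mk_mul mk1 => hd /mk_inj [e1 e2 e3 e4].
have ad : a * (a + d) = 2 by lra.
have ad0 : a + d != 0 by apply/eqP => E; rewrite E mulr0 in ad; clear -ad; lra.
have b0 : b = 0.
  have : b * (a + d) = 0 by lra.
  by move/eqP; rewrite mulf_eq0 (negbTE ad0) orbF => /eqP.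
have c0 : c = 0.
  have : c * (a + d) = 0 by lra.
  by move/eqP; rewrite mulf_eq0 (negbTE ad0) orbF => /eqP.
rewrite b0 c0 in e1 e4 hd *.
have a0 : a != 0 by apply/eqP => E; rewrite E in e1; clear -e1; lra.
have ead : a = d.
  have : a * (a - d) = 0 by lra.
  by move/eqP; rewrite mulf_eq0 (negbTE a0) /= subr_eq0 => /eqP.
rewrite -ead.
have : (a - 1) * (a + 1) = 0 by lra.
move/eqP; rewrite mulf_eq0 => /orP [] /eqP F.
  by have -> : a = 1 by lra.
by rewrite mkN oppr0; have -> : a = -1 by lra.
Qed.

Lemma hom_conj phi K K' : hom phi -> K' *m K = 1%:M -> K *m K' = 1%:M ->
  hom (fun X => K' *m phi X *m K).
Proof.
move=> [H1 H2 H3] e1 e2; split.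
- move=> X sX; rewrite /sl !det_mulmx (H1 _ sX) mulr1 -det_mulmx e1.
  exact: sl1.
- move=> X Y sX sY; rewrite H2 //.
  by rewrite !mulmxA -[K' *m phi X *m K *m K']mulmxA e2 mulmx1.
- move=> X Y sX sY e; apply: H3 => //.
  have := congr1 (fun Z => K *m Z *m K') e.
  by rewrite !mulmxA e2 !mul1mx -!mulmxA e2 !mulmx1.
Qed.

Lemma sl_u t : sl (u t). Proof. apply: sl_mk; lra. Qed.
Lemma sl_v t : sl (v t). Proof. apply: sl_mk; lra. Qed.

Definition w0 : M := u 1 *m v (-1) *m u 1.
Definition w0i : M := u (-1) *m v 1 *m u (-1).

Lemma w0E : w0 = mk 0 1 (-1) 0.
Proof. by rewrite /w0 /u /v !mk_mul; congr (mk _ _ _ _); lra. Qed.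
Lemma w0iE : w0i = mk 0 (-1) 1 0.
Proof. by rewrite /w0i /u /v !mk_mul; congr (mk _ _ _ _); lra. Qed.
Lemma w0w0i : w0 *m w0i = 1%:M.
Proof. by rewrite w0E w0iE mk_mul mk1; congr (mk _ _ _ _); lra. Qed.
Lemma w0iw0 : w0i *m w0 = 1%:M.
Proof. by rewrite w0E w0iE mk_mul mk1; congr (mk _ _ _ _); lra. Qed.

Lemma dec_mk (a b c d : R) : a != 0 -> a * d - b * c = 1 ->
  mk a b c d = v (c / a) *m (u a *m v (- 1 / a) *m u a *m w0i) *m u (b / a).
Proof.
move=> a0 hd.
have Ed : d = (1 + b * c) / a.
  by apply: (mulfI a0); rewrite mulrCA mulfV // mulr1; lra.
by rewrite Ed w0iE /u /v !mk_mul; congr (mk _ _ _ _); field.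
Qed.

Ltac slt := repeat first [assumption | exact: sl_u | exact: sl_v | exact: sl1 | apply: sl_mul].

Lemma gen (P : M -> Prop) :
  (forall X Y, sl X -> sl Y -> P X -> P Y -> P (X *m Y)) ->
  (forall t, P (u t)) -> (forall t, P (v t)) -> forall X, sl X -> P X.
Proof.
move=> Pm Pu Pv.
have sw0i : sl w0i by rewrite /w0i; slt.
have Pw0i : P w0i by rewrite /w0i; repeat first [assumption | exact: sl_u | exact: sl_v | exact: sl1 | exact: (Pu) | exact: (Pv) | apply: sl_mul | apply: (Pm)].
have sw0 : sl w0 by rewrite /w0; slt.
have Pd a : sl (u a *m v (- 1 / a) *m u a *m w0i) /\ P (u a *m v (- 1 / a) *m u a *m w0i).
  by split; [slt | repeat first [assumption | exact: sl_u | exact: sl_v | exact: sl1 | exact: (Pu) | exact: (Pv) | apply: sl_mul | apply: (Pm)]].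
have Pnz X : sl X -> X 0 0 != 0 -> P X.
  move=> sX a0; move: sX; rewrite [X]mk_eta /sl mk_det => hd.
  have [sD PD] := Pd (X 0 0).
  rewrite (dec_mk a0 hd); repeat first [assumption | exact: sl_u | exact: sl_v | exact: sl1 | exact: (Pu) | exact: (Pv) | apply: sl_mul | apply: (Pm)].
move=> X sX; have [a0|a0] := eqVneq (X 0 0) 0; last exact: Pnz sX a0.
have sY : sl (X *m w0) by apply: sl_mul.
have -> : X = X *m w0 *m w0i by rewrite -mulmxA w0w0i mulmx1.
apply: Pm => //; apply: Pnz => //.
move: sX; rewrite [X]mk_eta w0E mk_mul /sl mk_det !mkE a0 => hd.
apply/eqP => E; have e0 : X 0 1 = 0 by clear -E; lra.
by rewrite e0 in hd; clear -hd; lra.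
Qed.

End Grp.

Section Add.
Variable R : realType.

Lemma additive_id (f : R -> R) : (forall x y, f (x + y) = f x + f y) -> f 1 = 1 ->
  (forall x, 0 <= x -> 0 <= f x) -> forall x, f x = x.
Proof.
move=> fD f1 fp.
have f0 : f 0 = 0.
  have := fD 0 0; rewrite addr0 => e; lra.
have fN x : f (- x) = - f x.
  have := fD x (- x); rewrite subrr f0 => e; lra.
have mono x y : x <= y -> f x <= f y.
  move=> le; have := fp (y - x); rewrite subr_ge0 => /(_ le).
  by rewrite fD fN; lra.
have fn (n : nat) : f n%:R = n%:R.
  elim: n => [|n IH]; first by rewrite f0.
  by rewrite -natr1 fD IH f1.
have fz (z : int) : f z%:~R = z%:~R.
  case: z => n; first by rewrite -pmulrn fn.
  by rewrite NegzE mulrNz fN -pmulrn fn.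
have fm x (n : nat) : f (x *+ n) = f x *+ n.
  elim: n => [|n IH]; first by rewrite !mulr0n f0.
  by rewrite !mulrS fD IH.
have le x : f x <= x.
  rewrite leNgt; apply/negP => lt.
  set d := f x - x.
  have d0 : 0 < d by rewrite /d subr_gt0.
  set N := Num.bound (d^-1).
  have hN : d^-1 < N%:R by apply: archi_boundP; rewrite invr_ge0 ltW.
  have Nd : 1 < d * N%:R.
    by rewrite -{1}(mulfV (lt0r_neq0 d0)) ltr_pM2l.
  set y := x *+ N.
  have fy : f y = y + d * N%:R by rewrite /y fm /d -mulr_natr -mulr_natr -mulr_natl; ring.
  set m := Num.floor y.
  have h1 := floor_le y; have h2 := floorD1_gt y.
  have := mono _ _ (ltW h2); rewrite fz fy => h3.
  have : m%:~R + 1 = (m + 1)%:~R :> R by rewrite intrD.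
  lra.
move=> x; apply/eqP; rewrite eq_le le /=.
have := le (- x); rewrite fN; lra.
Qed.

End Add.

Ltac slt := repeat first [assumption | exact: sl_u | exact: sl_v | exact: sl1 | apply: sl_mul].

Section Fix.
Variable R : realType.
Local Notation M := 'M[R^o]_2.
Local Notation mk := (@mk R).
Local Notation u := (@u R).
Local Notation v := (@v R).
Local Notation sl := (@sl R).

#[local] Hint Resolve sl_u sl_v sl1 : core.

Lemma uD s t : u (s + t) = u s *m u t.
Proof. by rewrite /u mk_mul; congr (mk _ _ _ _); lra. Qed.

Lemma vE s : v s = w0 R *m u (- s) *m w0i R.
Proof. by rewrite w0E w0iE /u /v !mk_mul; congr (mk _ _ _ _); lra. Qed.

Lemma sqm1 X : sl X -> X *m X = - 1%:M -> X 0 0 + X 1 1 = 0.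
Proof.
rewrite [X]mk_eta /sl mk_det mk_mul mN1 !mkE => hd /mk_inj [e1 e2 e3 e4].
have : (X 0 0 + X 1 1) * (X 0 0 + X 1 1) = 0 by lra.
by move/eqP; rewrite mulf_eq0 orbb => /eqP.
Qed.

Lemma uvu T S : u T *m v S *m u T = mk (1 + T * S) (T * (2 + T * S)) S (1 + T * S).
Proof. by rewrite /u /v !mk_mul; congr (mk _ _ _ _); ring. Qed.

Lemma fixid phi : hom phi -> (forall t, phi (u t) = u (phi (u t) 0 1)) ->
  phi (u 1) = u 1 -> phi (v (-1)) = v (-1) -> forall X, sl X -> phi X = X.
Proof.
move=> H hu hu1 hv1.
have h1 := hom1 H; have hN := homN1 H; case: H => H1 H2 H3.
set f := fun t => phi (u t) 0 1.
have hu' t : phi (u t) = u (f t) by exact: hu.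
have fD s t : f (s + t) = f s + f t.
  have := hu' (s + t); rewrite uD H2 // !hu' -uD => /mk_inj [_ e _ _].
  by rewrite e.
have f1 : f 1 = 1 by rewrite /f hu1 /u mk01.
have f0 : f 0 = 0 by have := fD 0 0; rewrite addr0; lra.
have fN s : f (- s) = - f s by have := fD s (- s); rewrite subrr f0; lra.
have sw0 : sl (w0 R) by rewrite /w0; slt.
have sw0i : sl (w0i R) by rewrite /w0i; slt.
have pw0 : phi (w0 R) = w0 R by rewrite /w0 !H2 ?hu1 ?hv1 //; slt.
have pw0i : phi (w0i R) = w0i R.
  have : phi (w0 R *m w0i R) = 1%:M by rewrite w0w0i h1.
  rewrite H2 // pw0 => e.
  have := congr1 (mulmx (w0i R)) e.
  by rewrite mulmxA w0iw0 mul1mx mulmx1.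
have hv s : phi (v s) = v (f s).
  rewrite vE H2; [|by slt|by slt].
  by rewrite H2 // pw0 pw0i hu' -[f s]opprK -fN [RHS]vE opprK.
have fsq t : f (t * t) = f t * f t.
  have [->|t0] := eqVneq t 0; first by rewrite mulr0 f0 mulr0.
  set wt := u t *m v (- 1 / t) *m u t.
  have swt : sl wt by rewrite /wt; slt.
  have wt2 : wt *m wt = - 1%:M.
    by rewrite /wt uvu mk_mul mN1; congr (mk _ _ _ _); field.
  have pwt : phi wt = u (f t) *m v (f (- 1 / t)) *m u (f t).
    by rewrite /wt !H2 ?hu' ?hv //; slt.
  have TS : f t * f (- 1 / t) = -1.
    have := sqm1 (H1 _ swt); rewrite -H2 // wt2 hN => /(_ erefl).
    rewrite pwt uvu !mkE; lra.
  have dgE : wt *m w0i R = mk t 0 0 (1 / t).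
    by rewrite /wt uvu w0iE mk_mul; congr (mk _ _ _ _); field.
  have pdg : phi (mk t 0 0 (1 / t)) = mk (f t) 0 0 (- f (- 1 / t)).
    by rewrite -dgE H2 // pwt pw0i uvu TS w0iE mk_mul; congr (mk _ _ _ _); lra.
  have sdg : sl (mk t 0 0 (1 / t)) by rewrite -dgE; slt.
  have comm : mk t 0 0 (1 / t) *m u 1 = u (t * t) *m mk t 0 0 (1 / t).
    by rewrite /u !mk_mul; congr (mk _ _ _ _); field.
  have := congr1 phi comm; rewrite !H2 // pdg !hu' f1 /u !mk_mul.
  move=> /mk_inj [_ e _ _].
  have e2 := congr1 (fun z => f t * z) e.
  have e3 := congr1 (fun z => f (t * t) * z) TS; simpl in e2, e3.
  lra.
have fpos x : 0 <= x -> 0 <= f x.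
  move=> x0; rewrite -(sqr_sqrtr x0) expr2 fsq.
  by rewrite -expr2 sqr_ge0.
have fid := additive_id fD f1 fpos.
have Pu t : phi (u t) = u t by rewrite hu' fid.
have Pv t : phi (v t) = v t by rewrite hv fid.
apply: gen => //.
by move=> X Y sX sY eX eY; rewrite H2 // eX eY.
Qed.

End Fix.

Section Classify.
Variable R : realType.
Local Notation M := 'M[R^o]_2.
Local Notation mk := (@mk R).
Local Notation u := (@u R).
Local Notation v := (@v R).
Local Notation sl := (@sl R).
#[local] Hint Resolve sl_u sl_v sl1 : core.

Lemma stepA phi : hom phi -> exists K K' : M,
  [/\ K' *m K = 1%:M, K *m K' = 1%:M & K' *m phi (u 1) *m K = u 1].
Proof.
move=> H; have [sp pnI tr] := unip_u H (oner_neq0 R).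
move: sp pnI tr; rewrite [phi (u 1)]mk_eta.
set a := phi _ 0 0; set b := phi _ 0 1; set c := phi _ 1 0; set d := phi _ 1 1.
rewrite /sl mk_det !mkE => hd pnI tr.
have Ed : d = 2 - a by lra.
have [c0|c0] := eqVneq c 0.
  have a1 : a = 1.
    have : (a - 1) * (a - 1) = 0 by rewrite c0 Ed in hd; lra.
    by move/eqP; rewrite mulf_eq0 orbb subr_eq0 => /eqP.
  have b0 : b != 0.
    apply/eqP => b0; apply: pnI; rewrite mk1 b0 c0 Ed a1; congr (mk _ _ _ _); lra.
  exists (mk b 0 0 1), (mk (1 / b) 0 0 1); split.
  - by rewrite mk_mul mk1; congr (mk _ _ _ _); field.
  - by rewrite mk_mul mk1; congr (mk _ _ _ _); field.
  - by rewrite c0 Ed a1 /u !mk_mul; congr (mk _ _ _ _); field.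
have Eb : b = - (a - 1) ^+ 2 / c.
  apply: (mulIf c0); rewrite mulfVK //; rewrite Ed in hd; rewrite expr2; lra.
exists (mk (a - 1) 1 c 0), (mk 0 (1 / c) 1 ((1 - a) / c)); split.
- by rewrite mk_mul mk1; congr (mk _ _ _ _); field.
- by rewrite mk_mul mk1; congr (mk _ _ _ _); field.
- by rewrite Eb Ed /u !mk_mul; congr (mk _ _ _ _); field.
Qed.

Lemma u0 : u 0 = 1%:M.
Proof. by rewrite /u mk1. Qed.

Lemma stepB phi : hom phi -> phi (u 1) = u 1 ->
  forall t, phi (u t) = u (phi (u t) 0 1).
Proof.
move=> H hu1 t.
have [->|t0] := eqVneq t 0; first by rewrite u0 (hom1 H) mxE /= u0.
have [sq _ tr] := unip_u H t0.
have comm : phi (u t) *m u 1 = u 1 *m phi (u t).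
  case: H => H1 H2 H3.
  by rewrite -hu1 -!H2 // -!uD addrC.
move: sq tr comm; rewrite [phi (u t)]mk_eta.
set a := phi _ 0 0; set b := phi _ 0 1; set c := phi _ 1 0; set d := phi _ 1 1.
rewrite /sl mk_det !mkE /u !mk_mul => hd tr /mk_inj [e1 e2 e3 e4].
congr (mk _ _ _ _); lra.
Qed.

Lemma w0sq : w0 R *m w0 R = - 1%:M.
Proof. by rewrite w0E mk_mul mN1; congr (mk _ _ _ _); lra. Qed.

Lemma stepC phi : hom phi -> phi (u 1) = u 1 ->
  exists r, u (- r) *m phi (v (-1)) *m u r = v (-1).
Proof.
move=> H hu1.
have m10 : (-1 : R) != 0 by rewrite oppr_eq0 oner_neq0.
have [sq _ tr] := unip_v H m10.
have hN := homN1 H.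
have pw : phi (w0 R) = u 1 *m phi (v (-1)) *m u 1.
  by case: H => H1 H2 H3; rewrite /w0 !H2 ?hu1 //; apply: sl_mul.
have sw : sl (w0 R) by rewrite /w0; apply: sl_mul; [apply: sl_mul|].
have tw : phi (w0 R) 0 0 + phi (w0 R) 1 1 = 0.
  case: (H) => H1 H2 H3.
  by apply: sqm1; [exact: H1 | rewrite -H2 // w0sq hN].
move: sq tr tw; rewrite pw [phi (v _)]mk_eta.
set a := phi _ 0 0; set b := phi _ 0 1; set c := phi _ 1 0; set d := phi _ 1 1.
rewrite /sl mk_det /u !mk_mul !mkE => hd tr tw.
have Ec : c = -1 by lra.
have Ed : d = 2 - a by lra.
have Eb : b = (a - 1) ^+ 2 by rewrite Ec Ed in hd; rewrite expr2; lra.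
exists (1 - a); rewrite /v !mk_mul Eb Ec Ed; congr (mk _ _ _ _); ring.
Qed.

Lemma conj_cancel (A A' Y : M) : A *m A' = 1%:M -> A *m (A' *m Y *m A) *m A' = Y.
Proof. by move=> e; rewrite !mulmxA e mul1mx -mulmxA e mulmx1. Qed.

Lemma classify phi : hom phi -> exists K K' : M,
  [/\ K' *m K = 1%:M, K *m K' = 1%:M & forall X, sl X -> phi X = K *m X *m K'].
Proof.
move=> H.
have [K1 [K1' [e1 e2 hu1]]] := stepA H.
have H1 := hom_conj H e1 e2.
have [r hr] := stepC H1 hu1.
have er1 : u r *m u (- r) = 1%:M by rewrite -uD subrr u0.
have er2 : u (- r) *m u r = 1%:M by rewrite -uD addNr u0.
have H2 := hom_conj H1 er2 er1.
have hu2 : u (- r) *m (K1' *m phi (u 1) *m K1) *m u r = u 1.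
  by rewrite hu1 -!uD; congr u; ring.
have fx := fixid H2 (stepB H2 hu2) hu2 hr.
have eK1 : (u (- r) *m K1') *m (K1 *m u r) = 1%:M.
  by rewrite -!mulmxA (mulmxA K1') e1 mul1mx er2.
have eK2 : (K1 *m u r) *m (u (- r) *m K1') = 1%:M.
  by rewrite -!mulmxA (mulmxA (u r)) er1 mul1mx e2.
exists (K1 *m u r), (u (- r) *m K1'); split => // X sX.
have E : (u (- r) *m K1') *m phi X *m (K1 *m u r) = X.
  by rewrite -[RHS](fx X sX) /= !mulmxA.
by rewrite -{2}E conj_cancel.
Qed.

End Classify.

Section Inv.
Variable R : realType.
Local Notation M := 'M[R^o]_2.
Local Notation mk := (@mk R).
Local Notation sl := (@sl R).

Lemma inv_right (A B : M) : A *m B = 1%:M -> invmx A = B.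
Proof.
move=> e; have [uA _] := mulmx1_unit e.
by rewrite -[invmx A]mulmx1 -e mulmxA mulVmx // mul1mx.
Qed.

Definition invar (K Y : M) : R := (\tr (Y *m K)) ^+ 2 / \det (Y *m K).

Lemma inv_step (K K' g x : M) (l : R) : K' *m K = 1%:M -> K *m K' = 1%:M ->
  g \in unitmx -> l != 0 -> \det (x *m K) != 0 ->
  invar K (g *m x *m invmx (l *: (K *m g *m K'))) = invar K x.
Proof.
move=> e1 e2 ug l0 dx.
have iv : invmx (l *: (K *m g *m K')) = l^-1 *: (K *m invmx g *m K').
  apply: inv_right.
  rewrite -scalemxAl -scalemxAr scalerA mulfV // scale1r.
  by rewrite !mulmxA -(mulmxA (K *m g) K' K) e1 mulmx1 mulmxK.
have yK : g *m x *m invmx (l *: (K *m g *m K')) *m K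
          = l^-1 *: (g *m (x *m K) *m invmx g).
  rewrite iv -scalemxAr -scalemxAl; congr (_ *: _).
  by rewrite !mulmxA -(mulmxA _ K' K) e1 mulmx1.
rewrite /invar yK mxtraceZ detZ !det_mulmx det_inv.
rewrite mxtrace_mulC mulKmx // -det_mulmx.
have dg : \det g != 0 by rewrite -unitfE -unitmxE.
field.
by rewrite dx dg l0.
Qed.

Lemma distinct_g (D s s' : R) : D != 0 -> 1 <= s -> `|D| < s -> 1 <= s' -> `|D| < s' ->
  (s + D / s) ^+ 2 / (s * (D / s)) = (s' + D / s') ^+ 2 / (s' * (D / s')) -> s = s'.
Proof.
move=> D0 s1 sD s1' sD'.
have s0 : s != 0 by apply/eqP => e; rewrite e in s1; lra.
have s0' : s' != 0 by apply/eqP => e; rewrite e in s1'; lra.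
rewrite [s * _]mulrC [s' * _]mulrC !divfK // => e.
have hD : - s < D < s by move: sD; rewrite ltr_norml.
have hD' : - s' < D < s' by move: sD'; rewrite ltr_norml.
have gpos : 0 < s + D / s.
  have : 0 < s * s + D by nra.
  have -> : s + D / s = (s * s + D) / s by field.
  by move=> h; apply: divr_gt0 => //; lra.
have gpos' : 0 < s' + D / s'.
  have : 0 < s' * s' + D by nra.
  have -> : s' + D / s' = (s' * s' + D) / s' by field.
  by move=> h; apply: divr_gt0 => //; lra.
have e2 : (s + D / s) ^+ 2 = (s' + D / s') ^+ 2.
  by apply: (mulIf (invr_neq0 D0)).
have e3 : s + D / s = s' + D / s'.
  move/eqP: e2; rewrite -subr_eq0 subr_sqr mulf_eq0 => /orP [/eqP|/eqP] h.
    lra.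
  lra.
have e4 : (s - s') * (s * s' - D) = 0.
  have := congr1 (fun z => z * (s * s')) e3 => /=.
  have -> : (s + D / s) * (s * s') = s * s * s' + D * s' by field.
  have -> : (s' + D / s') * (s * s') = s' * s' * s + D * s by field.
  move=> h; lra.
move/eqP: e4; rewrite mulf_eq0 => /orP [/eqP h|/eqP h]; first lra.
exfalso; nra.
Qed.

Lemma rinf (G : set M) phi K K' : (forall A, G A -> A \in unitmx) ->
  (forall A, sl A -> G A) -> K' *m K = 1%:M -> K *m K' = 1%:M ->
  phi 1%:M = 1%:M ->
  (forall g, G g -> exists2 l : R, l != 0 & phi g = l *: (K *m g *m K')) ->
  Reidemeister_infinite G phi.
Proof.
move=> GU slG e1 e2 p1 form.
set D := \det K.
have D0 : D != 0.
  apply/eqP => D0; have := congr1 determinant e2.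
  rewrite det_mulmx det1 -/D D0 mul0r => h.
  by move/eqP: h; rewrite eq_sym oner_eq0.
have dK' : D * \det K' = 1 by rewrite -det_mulmx e2 det1.
pose s (n : nat) : R := n%:R + 1 + `|D|.
have s1 n : 1 <= s n by rewrite /s; have := normr_ge0 D; have := ler0n R n; lra.
have sD n : `|D| < s n by rewrite /s; have := ler0n R n; lra.
have s0 n : s n != 0 by apply/eqP => e; have := s1 n; rewrite e; lra.
pose xs n := mk (s n) 0 0 (D / s n) *m K'.
have xK n : xs n *m K = mk (s n) 0 0 (D / s n) by rewrite /xs -mulmxA e1 mulmx1.
have sx n : sl (xs n).
  rewrite /sl /xs det_mulmx mk_det mulr0 subr0 [s n * _]mulrC divfK //.
have Gx n : G (xs n) by exact: slG.
have dx n : \det (xs n *m K) != 0 by rewrite xK mk_det mulr0 subr0 [s n * _]mulrC divfK.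
have ivx n : invar K (xs n) = (s n + D / s n) ^+ 2 / (s n * (D / s n)).
  by rewrite /invar xK mk_tr mk_det mulr0 subr0.
pose F n := twisted_class G phi (xs n).
have Finj : injective F.
  move=> n m eF.
  have : twisted_class G phi (xs m) (xs n).
    rewrite -/(F m) -eF /F /twisted_class /=.
    by exists 1%:M; [apply: slG; exact: sl1|rewrite mul1mx p1 invmx1 mulmx1].
  case=> g Gg E.
  have [l l0 pg] := form g Gg.
  have : invar K (xs n) = invar K (xs m) by rewrite E pg inv_step // GU.
  rewrite !ivx => /(distinct_g D0 (s1 n) (sD n) (s1 m) (sD m)).
  rewrite /s => h; apply/eqP; rewrite -(eqr_nat R); apply/eqP; lra.
rewrite /Reidemeister_infinite => fin.
have := @finite_preimage _ _ _ F _ fin.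
have -> : (F @^-1` (twisted_class G phi @` G))%classic = setT.
  apply/seteqP; split => n //= _; by exists (xs n).
move=> h; apply: infinite_nat; apply: h.
by move=> n m _ _; exact: Finj.
Qed.

End Inv.

Section Final.
Variable R : realType.
Local Notation M := 'M[R^o]_2.
Local Notation mk := (@mk R).
Local Notation u := (@u R).
Local Notation v := (@v R).
Local Notation sl := (@sl R).
#[local] Hint Resolve sl_u sl_v sl1 : core.

Lemma topaut_inj (G : set M) phi : top_aut G phi ->
  forall X Y, G X -> G Y -> phi X = phi Y -> X = Y.
Proof. by case=> _ _ _ [psi [_ h _ _]] X Y gX gY e; rewrite -(h X gX) e h. Qed.

Lemma sl_case phi : top_aut (@SL2 R) phi -> Reidemeister_infinite (@SL2 R) phi.
Proof.
move=> T; have inj := topaut_inj T; case: T => H1 H2 _ _.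
have H : hom phi by split.
have [K [K' [e1 e2 form]]] := classify H.
apply: (@rinf _ _ _ K K') => //.
- by move=> A; exact: sl_unit.
- exact: hom1 H.
- by move=> g sg; exists 1; [exact: oner_neq0 | rewrite scale1r form].
Qed.

Lemma det_fix (A B : M) : \det A != 0 -> \det B != 0 -> A *m B = B *m B *m A ->
  \det B = 1.
Proof.
move=> dA dB e.
have := congr1 determinant e; rewrite !det_mulmx => h.
have : \det A * \det B * (1 - \det B) = 0 by lra.
move/eqP; rewrite !mulf_eq0 (negbTE dA) (negbTE dB) /= subr_eq0 => /eqP <-.
done.
Qed.

Lemma gl_case phi : top_aut (@GL2 R) phi -> Reidemeister_infinite (@GL2 R) phi.
Proof.
move=> T; have inj := topaut_inj T; case: T => H1 H2 _ _.
have U1 : (1%:M : M) \in unitmx by exact: unitmx1.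
have p1 : phi 1%:M = 1%:M.
  have e : phi 1%:M = phi 1%:M *m phi 1%:M by rewrite -H2 ?mulmx1.
  have U := H1 _ U1.
  have := congr1 (mulmx (invmx (phi 1%:M))) e.
  by rewrite (mulVmx U) mulmxA (mulVmx U) mul1mx.
have dnz (X : M) : X \in unitmx -> \det (phi X) != 0.
  by move=> uX; rewrite -unitfE -unitmxE; exact: H1.
have detone : forall X, sl X -> \det (phi X) = 1.
  apply: gen.
  - move=> X Y sX sY eX eY.
    by rewrite (H2 _ _ (sl_unit sX) (sl_unit sY)) det_mulmx eX eY mulr1.
  - move=> t; set D := mk 2 0 0 1.
    have uD : D \in unitmx by rewrite unitmxE mk_det unitfE; apply/eqP; lra.
    have uu := sl_unit (sl_u t).
    apply: (det_fix (dnz _ uD) (dnz _ uu)).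
    have e : D *m u t = u t *m u t *m D by rewrite /u !mk_mul; congr (mk _ _ _ _); lra.
    have := congr1 phi e.
    rewrite (H2 _ _ uD uu) (H2 _ _ _ uD) ?H2 //.
    exact: sl_unit (sl_mul (sl_u t) (sl_u t)).
  - move=> t; set D := mk 1 0 0 2.
    have uD : D \in unitmx by rewrite unitmxE mk_det unitfE; apply/eqP; lra.
    have uu := sl_unit (sl_v t).
    apply: (det_fix (dnz _ uD) (dnz _ uu)).
    have e : D *m v t = v t *m v t *m D by rewrite /v !mk_mul; congr (mk _ _ _ _); lra.
    have := congr1 phi e.
    rewrite (H2 _ _ uD uu) (H2 _ _ _ uD) ?H2 //.
    exact: sl_unit (sl_mul (sl_v t) (sl_v t)).
have H : hom phi.
  split => //.
  - move=> X Y sX sY; exact: H2 (sl_unit sX) (sl_unit sY).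
  - move=> X Y sX sY; exact: inj (sl_unit sX) (sl_unit sY).
have [K [K' [e1 e2 form]]] := classify H.
apply: (@rinf _ _ _ K K') => //.
- by move=> A sA; exact: sl_unit.
move=> A uA.
set C := K' *m phi A *m K.
have comm s : sl s -> C *m s = A *m s *m invmx A *m C.
  move=> ss.
  have sS : sl (A *m s *m invmx A).
    rewrite /sl !det_mulmx det_inv ss mulr1 mulfV //.
    by rewrite -unitfE -unitmxE.
  have e : phi (A *m s) = phi (A *m s *m invmx A *m A) by rewrite mulmxKV.
  have uS := sl_unit sS; have us := sl_unit ss.
  rewrite (H2 _ _ uA us) (H2 _ _ uS uA) (form _ ss) (form _ sS) in e.
  have := congr1 (fun Z => K' *m Z *m K) e.
  by rewrite /C /= !mulmxA e1 mul1mx -(mulmxA _ K' K) e1 mulmx1.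
set B := invmx A *m C.
have Bc s : sl s -> B *m s = s *m B.
  by move=> ss; rewrite /B -mulmxA comm // !mulmxA mulVmx // mul1mx.
have CB : C = A *m B by rewrite /B mulmxA mulmxV // mul1mx.
have pA : phi A = K *m C *m K' by rewrite /C conj_cancel.
have Bu := Bc _ (sl_u 1); have Bv := Bc _ (sl_v 1).
move: Bu Bv; rewrite [B]mk_eta /u /v !mk_mul.
move=> /mk_inj [b1 b2 b3 b4] /mk_inj [c1 c2 c3 c4].
have EB : B = B 0 0 *: 1%:M.
  rewrite [LHS]mk_eta mk1 mkZ; congr (mk _ _ _ _); lra.
have pA' : phi A = B 0 0 *: (K *m A *m K').
  by rewrite pA CB {1}EB -scalemxAr mulmx1 -scalemxAr -scalemxAl.
exists (B 0 0) => //.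
apply/eqP => p0; have := dnz A uA; rewrite pA' p0 scale0r det0.
by rewrite eqxx.
Qed.

Theorem main_thm : top_Rinf (@SL2 R) /\ top_Rinf (@GL2 R).
Proof. by split => phi; [exact: sl_case | exact: gl_case]. Qed.

End Final.

Theorem theorem5p7 (R : realType) : top_Rinf (@SL2 R) /\ top_Rinf (@GL2 R).
Proof. exact: main_thm. Qed.
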